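(* Let $G$ be a finitely generated residually finite group and $\phi\in\operatorname{Aut}(G)$. If $\operatorname{Stab}_\phi(g)$ is infinite for some $g\in G$, then $R(\phi)=\infty$.
   Context: For an endomorphism $\phi$ of $G$, $R(\phi)\in\mathbb{N}\cup\{\infty\}$ is the number of classes of the relation $x\sim hx\phi(h)^{-1}$ ($h\in G$). The $\phi$-stabiliser of $g\in G$ is $\operatorname{Stab}_\phi(g)=\{b\in G\mid g=bg\phi(b)^{-1}\}$. *)

(* Defs.v *)
From mathcomp Require Import all_boot all_fingroup.
From Stdlib Require Import List.
Set Implicit Arguments. Unset Strict Implicit. Unset Printing Implicit Defensive.

Record AbsGroup := MkAbsGroup {
  carrier :> Type;
  gmul : carrier -> carrier -> carrier;
  gone : carrier;
  ginv : carrier -> carrier;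
  gmulA : forall x y z, gmul x (gmul y z) = gmul (gmul x y) z;
  gmul1l : forall x, gmul gone x = x;
  gmul1r : forall x, gmul x gone = x;
  gmulVl : forall x, gmul (ginv x) x = gone;
  gmulVr : forall x, gmul x (ginv x) = gone
}.

Section Defs.
Variable G : AbsGroup.

Inductive generated (S : list G) : G -> Prop :=
  | gen_one : generated S (gone G)
  | gen_in : forall s, In s S -> generated S s
  | gen_mul : forall x y, generated S x -> generated S y -> generated S (gmul x y)
  | gen_inv : forall x, generated S x -> generated S (ginv x).

Definition finitely_generated : Prop :=
  exists S : list G, forall x : G, generated S x.

Definition residually_finite : Prop :=
  forall g : G, g <> gone G ->
    exists (H : finGroupType) (f : G -> H),
      (forall x y, f (gmul x y) = (f x * f y)%g) /\ f g <> 1%g.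

Definition is_hom (phi : G -> G) : Prop :=
  forall x y, phi (gmul x y) = gmul (phi x) (phi y).

Definition is_automorphism (phi : G -> G) : Prop :=
  is_hom phi /\ (forall x y, phi x = phi y -> x = y) /\ (forall y, exists x, phi x = y).

Definition twisted_conj (phi : G -> G) (x y : G) : Prop :=
  exists h : G, y = gmul (gmul h x) (ginv (phi h)).

Definition reidemeister_infinite (phi : G -> G) : Prop :=
  ~ exists L : list G, forall x : G, exists y, In y L /\ twisted_conj phi y x.

Definition Stab (phi : G -> G) (g : G) : G -> Prop :=
  fun b => g = gmul (gmul b g) (ginv (phi b)).

Definition infinite_set (P : G -> Prop) : Prop :=
  ~ exists L : list G, forall x, P x -> In x L.
End Defs.

(* Main.v *)
Require Import Defs.
From mathcomp Require Import all_boot all_fingroup zify.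
From Stdlib Require Import Classical.
From Stdlib Require List.
Set Implicit Arguments. Unset Strict Implicit. Unset Printing Implicit Defensive.

Definition mult (G : AbsGroup) (H : finGroupType) (f : G -> H) :=
  forall x y, f (gmul x y) = (f x * f y)%g.

Lemma mult1 (G : AbsGroup) (H : finGroupType) (f : G -> H) : mult f -> f (gone G) = 1%g.
Proof.
move=> hf; have e : f (gone G) = (f (gone G) * f (gone G))%g by rewrite -hf gmul1l.
have := congr1 (mulg (f (gone G))^-1) e; rewrite mulKg mulVg => <- //.
Qed.

Lemma multV (G : AbsGroup) (H : finGroupType) (f : G -> H) x : mult f -> f (ginv x) = (f x)^-1%g.
Proof.
move=> hf; rewrite -[f (ginv x)](mulgK (f x)) -hf gmulVl mult1 // mul1g //.
Qed.

Lemma gen_agree (G : AbsGroup) (H : finGroupType) (f1 f2 : G -> H) S :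
  (forall x, Defs.generated S x) -> mult f1 -> mult f2 -> (forall s, List.In s S -> f1 s = f2 s) ->
  forall x, f1 x = f2 x.
Proof.
move=> gS h1 h2 hS x; elim: (gS x) => [|s /hS //|y z _ e1 _ e2|y _ e].
- by rewrite !mult1.
- by rewrite h1 h2 e1 e2.
- by rewrite !multV // e.
Qed.

Lemma sep1 (G : AbsGroup) (rf : residually_finite G) (b : G) (l : list G) :
  exists (H : finGroupType) (f : G -> H), mult f /\
    forall y, List.In y l -> y <> b -> f y <> f b.
Proof.
elim: l => [|y l [H1 [f1 [m1 s1]]]].
  exists {perm unit}, (fun _ => 1%g); split => // x y; by rewrite mulg1.
case: (classic (y = b)) => [yb|yb].
  exists H1, f1; split => // z [<-|zl] //; exact: s1.
have nt : gmul y (ginv b) <> gone G.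
  move=> e; apply: yb.
  by rewrite -[y]gmul1r -(gmulVl b) gmulA e gmul1l.
have [H2 [f2 [m2 n2]]] := rf _ nt.
exists [the finGroupType of (H1 * H2)%type], (fun x => (f1 x, f2 x)); split.
  by move=> u v; rewrite m1 m2.
move=> z [<-|zl] zb e.
  have e2 := congr1 snd e; simpl in e2.
  by apply: n2; rewrite m2 multV // e2 mulgV.
by apply: (s1 z zl zb); move: (congr1 fst e).
Qed.

Lemma sep (G : AbsGroup) (rf : residually_finite G) (l : list G) :
  exists (H : finGroupType) (f : G -> H), mult f /\
    forall x y, List.In x l -> List.In y l -> f x = f y -> x = y.
Proof.
elim: l => [|b l [H1 [f1 [m1 s1]]]].
  exists {perm unit}, (fun _ => 1%g); split => // x y; by rewrite mulg1.
have [H2 [f2 [m2 n2]]] := sep1 rf b l.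
exists [the finGroupType of (H1 * H2)%type], (fun x => (f1 x, f2 x)); split.
  by move=> u v; rewrite m1 m2.
move=> x y hx hy e.
have e1 := congr1 fst e; have e2 := congr1 snd e; simpl in e1, e2.
case: hx => [hx|xl]; case: hy => [hy|yl]; subst => //.
- apply: NNPP => yb; exact (n2 y yl (fun h => yb (esym h)) (esym e2)).
- apply: NNPP => xb; exact (n2 x xl xb e2).
- exact: s1.
Qed.

Lemma iter_mult (G : AbsGroup) (phi : G -> G) k : is_hom phi ->
  forall x y, iter k phi (gmul x y) = gmul (iter k phi x) (iter k phi y).
Proof. by move=> hp; elim: k => [//|k IH] x y /=; rewrite IH hp. Qed.

Lemma iter_surj (G : AbsGroup) (phi : G -> G) k : (forall y, exists x, phi x = y) ->
  forall y, exists x, iter k phi x = y.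
Proof.
move=> hs; elim: k => [|k IH] y; first by exists y.
have [z <-] := hs y; have [x <-] := IH z; by exists x.
Qed.

Lemma map_eq_in (A B : Type) (g1 g2 : A -> B) (S : list A) s :
  map g1 S = map g2 S -> List.In s S -> g1 s = g2 s.
Proof.
elim: S => [//|a S IH] /= [e1 e2] [<-|sS] //; exact: IH.
Qed.

Lemma period (G : AbsGroup) (H : finGroupType) (phi : G -> G) (f : G -> H) (S : list G) :
  (forall x, Defs.generated S x) -> mult f -> is_automorphism phi ->
  exists p, 0 < p /\ forall x, f (iter p phi x) = f x.
Proof.
move=> gS mf [hp [hi hs]].
pose N := #|{: (size S).-tuple H}|.
pose c (i : 'I_N.+1) : (size S).-tuple H := map_tuple (fun s => f (iter i phi s)) (in_tuple S).
have ninj : ~ injective c.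
  move/leq_card; rewrite card_ord; by rewrite ltnn.
have [i [j [ij cij]]] : exists i j : 'I_N.+1, i < j /\ c i = c j.
  apply: NNPP => hne; apply: ninj => i j e.
  case: (ltngtP i j) => h.
  - by exfalso; apply: hne; exists i, j.
  - by exfalso; apply: hne; exists j, i; split.
  - exact: val_inj.
have agS : forall s, List.In s S -> f (iter i phi s) = f (iter j phi s).
  move=> s sS; have := congr1 val cij => /= e.
  exact: (map_eq_in e sS).
have ag : forall x, f (iter i phi x) = f (iter j phi x).
  apply: (gen_agree gS) => // x y.
  - by rewrite iter_mult // mf.
  - by rewrite iter_mult // mf.
exists (j - i); split; first by rewrite subn_gt0.
move=> x; have [y <-] := iter_surj i hs x.
by rewrite -iterD subnK ?ag // ltnW.
Qed.

Definition sig p (H : finGroupType) (u : {dffun 'I_p -> H}) : {dffun 'I_p -> H} :=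
  [ffun k => u (ordS k)].

Lemma sigM p (H : finGroupType) (u v : {dffun 'I_p -> H}) : sig (u * v)%g = (sig u * sig v)%g.
Proof. by apply/ffunP => k; rewrite !ffunE. Qed.

Lemma sigV p (H : finGroupType) (u : {dffun 'I_p -> H}) : sig (u^-1)%g = (sig u)^-1%g.
Proof. by apply/ffunP => k; rewrite !ffunE. Qed.

Lemma sig1 p (H : finGroupType) : sig (1 : [the finGroupType of {dffun 'I_p -> H}])%g = 1%g.
Proof. by apply/ffunP => k; rewrite !ffunE. Qed.

Definition tw p (H : finGroupType) (y u : {dffun 'I_p -> H}) : {dffun 'I_p -> H} :=
  (u^-1 * y * sig u)%g.

Lemma tw1 p (H : finGroupType) : (@tw p H)^~ (1 : [the finGroupType of {dffun 'I_p -> H}])%g =1 id.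
Proof. by move=> y; rewrite /tw sig1 invg1 mul1g mulg1. Qed.

Lemma twM p (H : finGroupType) : forall x, @act_morph [the finGroupType of {dffun 'I_p -> H}] _ (@tw p H) x.
Proof. by move=> x a b; rewrite /tw sigM invMg !mulgA. Qed.

Definition twact p (H : finGroupType) := TotalAction (@tw1 p H) (@twM p H).

Lemma big_list (G : AbsGroup) (P : G -> Prop) : infinite_set P ->
  forall n, exists l : list G, size l = n /\ List.NoDup l /\ forall x, List.In x l -> P x.
Proof.
move=> hinf; elim=> [|n [l [sz [nd hl]]]].
  by exists [::]; split => //; split => //; constructor.
have [x [Px nx]] : exists x, P x /\ ~ List.In x l.
  apply: NNPP => h; apply: hinf; exists l => x Px.
  by apply: NNPP => nx; apply: h; exists x.
exists (x :: l); split; first by rewrite /= sz.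
split; first by constructor.
by move=> y /= [<-|/hl].
Qed.

Lemma in_map_ex (G : Type) (T : eqType) (F : G -> T) (l : list G) u :
  u \in map F l -> exists x, List.In x l /\ F x = u.
Proof.
elim: l => [//|a l IH]; rewrite /= inE => /orP[/eqP->|/IH[x [xl <-]]].
  by exists a; split; [left|].
by exists x; split; [right|].
Qed.

Lemma in_map_in (G : Type) (T : eqType) (F : G -> T) (l : list G) x :
  List.In x l -> F x \in map F l.
Proof.
elim: l => [//|a l IH] /= [<-|xl]; rewrite inE; first by rewrite eqxx.
by rewrite IH ?orbT.
Qed.

Lemma uniq_map_in (G : Type) (T : eqType) (F : G -> T) (l : list G) :
  List.NoDup l -> (forall x y, List.In x l -> List.In y l -> F x = F y -> x = y) ->
  uniq (map F l).
Proof.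
elim: l => [//|a l IH] nd hinj /=.
have /List.NoDup_cons_iff [na ndl] := nd.
apply/andP; split.
  apply/negP => /in_map_ex [x [xl ex]]; apply: na.
  by rewrite -(hinj x a) //; [right|left].
apply: IH => // x y xl yl; apply: hinj; by right.
Qed.

Fixpoint Bd (k A : nat) : nat :=
  if k is k'.+1 then maxn (A * k) (Bd k' (A * (A * k))) else 0.

Lemma Bd_mono k A B : A <= B -> Bd k A <= Bd k B.
Proof.
elim: k A B => [//|k IH] A B AB /=.
rewrite geq_max; apply/andP; split.
  by rewrite leq_max (leq_mul AB) //.
rewrite leq_max; apply/orP; right; apply: IH.
by rewrite !leq_mul.
Qed.

Lemma seq_max (s : seq nat) : s != [::] -> exists2 m, m \in s & forall o, o \in s -> o <= m.
Proof.
elim: s => [//|a s IH] _.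
case: (eqVneq s [::]) => [->|ns].
  by exists a; rewrite ?mem_head // => o; rewrite inE => /eqP->.
have [m ms mmax] := IH ns.
case: (leqP a m) => am.
  exists m; first by rewrite inE ms orbT.
  by move=> o; rewrite inE => /orP[/eqP->//|/mmax].
exists a; first by rewrite mem_head.
move=> o; rewrite inE => /orP[/eqP->//|/mmax]; lia.
Qed.

Lemma sumn_le (s : seq nat) m : (forall o, o \in s -> o <= m) -> sumn s <= size s * m.
Proof.
elim: s => [//|a s IH] H /=.
rewrite mulSn leq_add ?H ?mem_head //; apply: IH => o os; by apply: H; rewrite inE os orbT.
Qed.

Lemma landau k : forall (s : seq nat) A C n, size s = k -> 0 < A -> 0 < C ->
  (forall o, o \in s -> (0 < o) && (o %| n)) -> A * sumn s = C * n ->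
  forall o, o \in s -> n %/ o <= Bd k A.
Proof.
elim: k => [|k IH] s A C n.
  by move=> /size0nil -> .
move=> sz A0 C0 hs hsum.
have ns : s != [::] by apply/eqP => e; rewrite e in sz.
have [m ms mmax] := seq_max ns.
have /andP[m0 mn] := hs m ms.
have pe := perm_to_rem ms.
set r := rem m s in pe.
have hr : forall o, o \in r -> (0 < o) && (o %| n).
  by move=> o or; apply: hs; rewrite (perm_mem pe) inE or orbT.
have szr : size r = k by move: (perm_size pe); rewrite sz /= => [[]].
have sumr : sumn s = m + sumn r by rewrite (perm_sumn pe).
set t := n %/ m.
have nt : n = t * m by rewrite divnK.
have hle := sumn_le mmax.
rewrite sz in hle.
have t1 : t <= A * k.+1.
  have : C * t * m <= A * k.+1 * m.
    by rewrite -mulnA -nt -hsum -mulnA leq_mul2l hle orbT.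
  rewrite leq_pmul2r // => h; apply: leq_trans h.
  by rewrite leq_pmull.
have At : A <= C * t.
  have : A * m <= C * t * m by rewrite -mulnA -nt -hsum sumr mulnDr leq_addr.
  by rewrite leq_pmul2r.
move=> o os /=.
rewrite leq_max.
case: (eqVneq o m) => [->|om]; first by rewrite t1.
have or : o \in r by move: os; rewrite (perm_mem pe) inE (negPf om).
apply/orP; right.
have hC : A * t * sumn r = (C * t - A) * n.
  rewrite mulnBl -[C * t * n]mulnA [t * n]mulnC mulnA -hsum.
  rewrite sumr nt. nia.
case: (ltnP A (C * t)) => hA.
  have At0 : 0 < A * t by rewrite muln_gt0 A0 /=; lia.
  have Ct0 : 0 < C * t - A by lia.
  have := IH r (A * t) (C * t - A) n szr At0 Ct0 hr hC o or.
  move/leq_trans; apply.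
  by apply: Bd_mono; rewrite leq_mul2l t1 orbT.
have eA : C * t = A by apply/eqP; rewrite eqn_leq hA At.
rewrite eA subnn mul0n in hC.
have /andP[o0 _] := hr o or.
have : sumn r = 0.
  move/eqP: hC; rewrite muln_eq0 => /orP[|/eqP//].
  rewrite muln_eq0 => /orP[/eqP A00|/eqP t0]; first by rewrite A00 in A0.
  by move: At; rewrite t0 muln0 leqn0 => /eqP A00; rewrite A00 in A0.
move=> s0; have : o <= sumn r.
  move: or; elim: (r) => [//|a l IHl]; rewrite inE /= => /orP[/eqP->|/IHl]; lia.
lia.
Qed.

Theorem mainTheorem10 (G : AbsGroup) (phi : G -> G) :
  finitely_generated G -> residually_finite G -> is_automorphism phi ->
  (exists g : G, infinite_set (Stab phi g)) ->
  reidemeister_infinite phi.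
Proof.
move=> [S gS] rf haut [g ginf] [L hL].
have [hp [hi hs]] := haut.
pose r := size L.
pose M := \max_(k < r.+1) Bd k 1.
have [bs [hlen [hnd hbs]]] := big_list ginf M.+1.
have [H [f [mf finj]]] := sep rf bs.
have [p [p0 hper]] := period gS mf haut.
pose T := [the finGroupType of {dffun 'I_p -> H}].
pose F (h : G) : T := [ffun k : 'I_p => f (iter k phi h)].
have FM : mult F.
  by move=> x y; apply/ffunP => k; rewrite !ffunE iter_mult // mf.
have Fphi : forall h, F (phi h) = sig (F h).
  move=> h; apply/ffunP => k; rewrite !ffunE -iterSr.
  case: (ltnP k.+1 p) => hk.
    by rewrite /ordS /= modn_small.
  have ek : k.+1 = p by apply/eqP; rewrite eqn_leq hk ltn_ord.
  by rewrite /ordS /= ek modnn /= -iterS ek hper.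
have Finj : forall x y, List.In x bs -> List.In y bs -> F x = F y -> x = y.
  move=> x y xb yb e; apply: finj => //.
  by have := congr1 (fun u : T => u (Ordinal p0)) e; rewrite !ffunE.
pose X := <<[set u | u \in map F S]>>%G.
have F_in : forall h, F h \in X.
  move=> h; elim: (gS h) => [|s sS|y z _ e1 _ e2|y _ e].
  - by rewrite mult1 // group1.
  - by apply: mem_gen; rewrite inE in_map_in.
  - by rewrite FM groupM.
  - by rewrite multV // groupV.
have X_F : forall u, u \in X -> exists h, F h = u.
  move=> u /gen_prodgP [n [c hc ->]].
  apply: (big_ind (fun v => exists h, F h = v)).
  - by exists (gone G); rewrite mult1.
  - by move=> v w [h1 <-] [h2 <-]; exists (gmul h1 h2); rewrite FM.
  move=> i _; have := hc i; rewrite inE => /in_map_ex [s [_ <-]]; by exists s.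
have sig_in : forall u, u \in X -> sig u \in X.
  by move=> u /X_F [h <-]; rewrite -Fphi F_in.
pose to := twact p H.
have acts : [acts X, on X | to].
  apply/actsP => a aX y /=; rewrite /tw.
  apply/idP/idP => hy.
  - have -> : y = (a * (a^-1 * y * sig a) * (sig a)^-1)%g by rewrite !mulgA mulgV mul1g mulgK.
    by apply: groupM; [apply: groupM | rewrite groupV sig_in].
  - by apply: groupM; [apply: groupM; rewrite ?groupV | apply: sig_in].
pose P := orbit to X @: X.
have Pcard : #|P| <= r.
  pose Q := [set orbit to X u | u in map F L].
  have : P \subset Q.
    apply/subsetP => Ob /imsetP [y yX ->].
    have [x <-] := X_F y yX.
    have [y0 [y0L [h ->]]] := hL x.
    have -> : F (gmul (gmul h y0) (ginv (phi h))) = to (F y0) (F h)^-1%g.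
      by rewrite /= /tw !FM multV // Fphi sigV invgK.
    have -> : orbit to X (to (F y0) (F h)^-1%g) = orbit to X (F y0).
      by apply/orbit_eqP; apply: mem_orbit; rewrite groupV F_in.
    by apply: imset_f; rewrite in_map_in.
  move/subset_leq_card => h; apply: leq_trans h _.
  apply: leq_trans (leq_imset_card _ _) _.
  by apply: leq_trans (card_size _) _; rewrite size_map.
pose s := map (fun B : {set {dffun 'I_p -> H}} => #|B|) (enum P).
pose C := 'C_X[F g | to]%g.
have hsg := card_orbit_stab to X (F g).
have o0 : 0 < #|orbit to X (F g)|.
  by rewrite card_gt0; apply/set0Pn; exists (F g); apply: orbit_refl.
have hs' : forall o, o \in s -> (0 < o) && (o %| #|X|).
  move=> o /mapP [Ob]; rewrite mem_enum => /imsetP [y yX ->] ->.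
  rewrite dvdn_orbit andbT card_gt0; apply/set0Pn; exists y; exact: orbit_refl.
have hsum : 1 * sumn s = 1 * #|X|.
  rewrite !mul1n -(acts_sum_card_orbit acts) sumnE big_map.
  by rewrite big_enum.
have oin : #|orbit to X (F g)| \in s.
  by apply: map_f; rewrite mem_enum; apply: imset_f; apply: F_in.
have szs : size s = #|P| by rewrite size_map -cardE.
have := @landau #|P| s 1 1 #|X| szs isT isT hs' hsum _ oin.
rewrite -hsg mulKn //.
have hM : Bd #|P| 1 <= M.
  have hP : #|P| < r.+1 by rewrite ltnS.
  exact: (@leq_bigmax _ (fun k : 'I_r.+1 => Bd k 1) (Ordinal hP)).
have lowC : M.+1 <= #|C|.
  have u := uniq_map_in hnd Finj.
  have := uniq_leq_size u (s2 := enum C).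
  rewrite size_map -cardE hlen; apply.
  move=> v /in_map_ex [b [bb <-]]; rewrite mem_enum.
  have hb : g = gmul (gmul b g) (ginv (phi b)) := hbs b bb.
  rewrite inE F_in /=; apply/astab1P.
  rewrite /= /tw -Fphi.
  have e : F g = (F b * F g * (F (phi b))^-1)%g by rewrite {1}hb !FM multV.
  by rewrite {1}e !mulgA mulVg mul1g mulgKV.
move=> h; have := leq_trans lowC (leq_trans h hM); by rewrite ltnn.
Qed.
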